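(* Let $p\equiv1\pmod5$ be prime and let $\psi$ be a character of order $5$ of $\mathbb{F}_p^*$. If $a,b,c\in\mathbb{Z}$ satisfy $a+c\not\equiv0\pmod5$ and $b+c\not\equiv0\pmod5$, then \[ \sum_{\chi}\chi(-1)\,J(\bar\chi\psi^a,\bar\chi\psi^b,\chi\psi^c)=-(p-1), \] where the sum runs over all multiplicative characters $\chi$ of $\mathbb{F}_p^*$.
   Context: Multiplicative characters of $\mathbb{F}_p^*$ are extended to $\mathbb{F}_p$ by $\chi(0):=0$, including for the trivial character; $\bar\chi$ denotes the inverse character. For characters $\chi_1,\dots,\chi_k$, the generalized Jacobi sum is $J(\chi_1,\dots,\chi_k):=\sum_{t_1+\dots+t_k=1,\ t_i\in\mathbb{F}_p}\chi_1(t_1)\cdots\chi_k(t_k)$. *)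

(* Defs.v *)
From HB Require Import structures.
From mathcomp Require Import all_boot all_order all_algebra all_field.
Set Implicit Arguments. Unset Strict Implicit. Unset Printing Implicit Defensive.
Import Order.TTheory GRing.Theory Num.Theory.
Local Open Scope ring_scope.

(* Multiplicative characters of F_p^*, extended to F_p by chi(0) := 0
   (also for the trivial character), with values in algC. *)
Definition is_mchar (p : nat) (chi : 'F_p -> algC) : Prop :=
  [/\ chi 0 = 0, chi 1 = 1 & forall x y, chi (x * y) = chi x * chi y].

Definition mchar_order (p : nat) (psi : 'F_p -> algC) (n : nat) : Prop :=
  [/\ (0 < n)%N,
      (forall t : 'F_p, t != 0 -> psi t ^+ n = 1) &
      (forall m : nat, (0 < m < n)%N -> exists2 t : 'F_p, t != 0 & psi t ^+ m != 1)].

Definition chmul (p : nat) (chi phi : 'F_p -> algC) : 'F_p -> algC :=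
  fun t => chi t * phi t.

Definition chpow (p : nat) (chi : 'F_p -> algC) (a : int) : 'F_p -> algC :=
  fun t => if t == 0 then 0 else chi t ^ a.

Definition chinv (p : nat) (chi : 'F_p -> algC) : 'F_p -> algC :=
  fun t => if t == 0 then 0 else (chi t)^-1.

Definition jacobi3 (p : nat) (c1 c2 c3 : 'F_p -> algC) : algC :=
  \sum_(t1 : 'F_p) \sum_(t2 : 'F_p) c1 t1 * c2 t2 * c3 (1 - t1 - t2).

(* Main.v *)
Require Import Defs.
From HB Require Import structures.
From mathcomp Require Import all_boot all_order all_algebra all_field all_fingroup all_solvable.
From mathcomp Require Import ring zify.
Import Order.TTheory GRing.Theory Num.Theory.
Local Open Scope ring_scope.
Set Implicit Arguments. Unset Strict Implicit. Unset Printing Implicit Defensive.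

Section Chars.
Variable p : nat.
Hypothesis pr_p : prime p.
Local Notation n := p.-1.
Hypothesis n_gt1 : (1 < n)%N.

Lemma n_gt0 : (0 < n)%N. Proof. exact: ltnW. Qed.

Lemma fermat (x : 'F_p) : x != 0 -> x ^+ n = 1.
Proof.
move=> xnz; apply: (mulfI xnz); rewrite mulr1 -exprS prednK ?prime_gt0 //.
by have := expf_card x; rewrite card_Fp.
Qed.

Lemma Fp_gen : {g : 'F_p | n.-primitive_root g}.
Proof.
have : has n.-primitive_root (enum (predC1 (0 : 'F_p))).
  apply: has_prim_root; first exact: n_gt0.
  - by apply/allP => x; rewrite mem_enum /= unity_rootE => /fermat ->.
  - exact: enum_uniq.
  - by rewrite -cardE cardC1 card_Fp.
by move/hasP/sig2_eqW => [g _ Hg]; exists g.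
Qed.

Definition g := sval Fp_gen.
Lemma gP : n.-primitive_root g. Proof. exact: svalP Fp_gen. Qed.

Definition zC := sval (C_prim_root_exists n_gt0).
Lemma zP : n.-primitive_root zC. Proof. exact: svalP (C_prim_root_exists n_gt0). Qed.

Definition dlog (t : 'F_p) : nat := find (fun i => g ^+ i == t) (iota 0 n).

Lemma dlogP t : t != 0 -> (dlog t < n)%N /\ g ^+ dlog t = t.
Proof.
move=> tnz; have [i ->] := prim_rootP gP (fermat tnz).
have hs : has (fun j => g ^+ j == g ^+ i) (iota 0 n).
  by apply/hasP; exists (val i); rewrite ?mem_iota //=.
have := has_find (fun j => g ^+ j == g ^+ i) (iota 0 n); rewrite hs size_iota => H.
split => //; have := nth_find 0%N hs; rewrite nth_iota // add0n => /eqP.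
by [].
Qed.

Lemma dlog_exp i : (i < n)%N -> dlog (g ^+ i) = i.
Proof.
move=> lti; have gnz : g ^+ i != 0.
  by rewrite expf_neq0 //; apply/negP => /eqP g0; have := prim_expr_order gP;
     rewrite g0 expr0n; case: (n) n_gt1 => // m _; rewrite oner_eq0 /= => /eqP; rewrite eq_sym oner_eq0.
have [lt e] := dlogP gnz; move/eqP: e; rewrite (eq_prim_root_expr gP).
by rewrite !modn_small // => /eqP.
Qed.

Lemma dlog1 : dlog 1 = 0%N.
Proof. by rewrite -(expr0 g) dlog_exp ?n_gt0. Qed.

Lemma dlogM x y : x != 0 -> y != 0 -> dlog (x * y) = (dlog x + dlog y)%[mod n].
Proof.
move=> xnz ynz; have [_ ex] := dlogP xnz; have [_ ey] := dlogP ynz.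
have [_ exy] := dlogP (mulf_neq0 xnz ynz).
apply/eqP; rewrite -(eq_prim_root_expr gP) exprD ex ey exy //.
Qed.

Definition chik (k : nat) (t : 'F_p) : algC :=
  if t == 0 then 0 else zC ^+ (k * dlog t).

Lemma chik_mchar k : is_mchar (chik k).
Proof.
split; first by rewrite /chik eqxx.
  by rewrite /chik oner_eq0 dlog1 muln0 expr0.
move=> x y; rewrite /chik mulf_eq0; case: eqP => [_|/eqP xnz]; first by rewrite mul0r.
case: eqP => [_|/eqP ynz] /=; first by rewrite mulr0.
rewrite -exprD; apply/eqP; rewrite (eq_prim_root_expr zP) -mulnDr.
by rewrite -modnMmr dlogM // modnMmr.
Qed.

Lemma mchar_exp (chi : 'F_p -> algC) x m : is_mchar chi -> chi (x ^+ m) = chi x ^+ m.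
Proof.
case=> _ h1 hM; elim: m => [|m IH]; first by rewrite !expr0.
by rewrite !exprS hM IH.
Qed.

Lemma mchar_chik (chi : 'F_p -> algC) : is_mchar chi ->
  exists2 k, (k < n)%N & chi =1 chik k.
Proof.
move=> hc; have [h0 h1 hM] := hc.
have : chi g ^+ n = 1 by rewrite -mchar_exp // prim_expr_order ?gP.
move/(prim_rootP zP) => [i ei]; exists (val i); first exact: ltn_ord.
move=> t.
rewrite /chik; case: eqP => [->|/eqP tnz] //.
have [_ e] := dlogP tnz; rewrite -{1}e mchar_exp // ei -exprM.
by [].
Qed.

Lemma g_neq0 : g != 0.
Proof.
apply/eqP => g0; have := prim_expr_order gP; rewrite g0 expr0n.
by case: (n) n_gt1 => // m _ /eqP; rewrite eq_sym oner_eq0.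
Qed.

Lemma dlog_g : dlog g = 1%N.
Proof. by rewrite -{1}(expr1 g) dlog_exp. Qed.

Definition chif k : {ffun 'F_p -> algC} := [ffun t => chik k t].

Lemma chif_inj i j : (i < n)%N -> (j < n)%N -> chif i = chif j -> i = j.
Proof.
move=> hi hj /ffunP /(_ g); rewrite !ffunE /chik (negbTE g_neq0) dlog_g !muln1.
by move/eqP; rewrite (eq_prim_root_expr zP) !modn_small // => /eqP.
Qed.

Lemma is_mchar_ext (f f' : 'F_p -> algC) : f =1 f' -> is_mchar f -> is_mchar f'.
Proof. by move=> e [h0 h1 hM]; split; rewrite -?e // => x y; rewrite -!e. Qed.

Lemma mchar_inv (chi : 'F_p -> algC) x : is_mchar chi -> x != 0 ->
  chi x != 0 /\ chi x^-1 = (chi x)^-1.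
Proof.
move=> [h0 h1 hM] xnz; have e : chi x * chi x^-1 = 1 by rewrite -hM mulfV.
split; last by rewrite (mulr1_eq e).
by apply/eqP => c0; move: e; rewrite c0 mul0r => /eqP; rewrite eq_sym oner_eq0.
Qed.

Variable s : seq {ffun 'F_p -> algC}.
Hypothesis s_uniq : uniq s.
Hypothesis s_all : forall chi : {ffun 'F_p -> algC}, chi \in s <-> is_mchar chi.

Lemma s_perm : perm_eq s [seq chif k | k <- iota 0 n].
Proof.
apply: uniq_perm => //.
  rewrite map_inj_in_uniq ?iota_uniq // => i j; rewrite !mem_iota !add0n.
  by move=> /andP[_ hi] /andP[_ hj]; apply: chif_inj.
move=> chi; apply/idP/idP => [/s_all hc | /mapP [k hk ->]].
  have [k hk e] := mchar_chik hc; apply/mapP; exists k; first by rewrite mem_iota.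
  by apply/ffunP => t; rewrite ffunE e.
apply/s_all; apply: (is_mchar_ext _ (chik_mchar k)) => t; by rewrite ffunE.
Qed.

Lemma sum_s (F : {ffun 'F_p -> algC} -> algC) :
  \sum_(chi <- s) F chi = \sum_(k < n) F (chif k).
Proof.
rewrite (perm_big _ s_perm) big_map.
by rewrite (_ : iota 0 n = index_iota 0 n) ?big_mkord // /index_iota subn0.
Qed.

Lemma ortho y : y != 0 -> \sum_(chi <- s) chi y = if y == 1 then n%:R else 0.
Proof.
move=> ynz; rewrite sum_s.
under eq_bigr => k _ do rewrite ffunE /chik (negbTE ynz) mulnC exprM.
case: eqP => [->|/eqP y1].
  rewrite dlog1; under eq_bigr => k _ do rewrite expr0 expr1n.
  by rewrite sumr_const card_ord.
set w := zC ^+ dlog y.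
have wn : w ^+ n = 1 by rewrite /w -exprM mulnC exprM (prim_expr_order zP) expr1n.
have w1 : w != 1.
  rewrite /w -(prim_order_dvd zP); have [lt e] := dlogP ynz.
  rewrite gtnNdvd // lt0n; apply/eqP => d0; move: e; rewrite d0 expr0.
  by move/esym/eqP; rewrite (negbTE y1).
have := subrX1 w n; rewrite wn subrr => /esym/eqP; rewrite mulf_eq0 subr_eq0.
by rewrite (negbTE w1) /= => /eqP.
Qed.

Lemma ortho3 x1 x2 x3 :
  \sum_(chi <- s) chi (-1) * chinv chi x1 * chinv chi x2 * chi x3
  = if [&& x1 != 0, x2 != 0 & x1 * x2 == - x3] then n%:R else 0.
Proof.
have hs (chi : {ffun 'F_p -> algC}) : chi \in s -> is_mchar chi by move/s_all.
case: (eqVneq x1 0) => [->|x1nz] /=.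
  by rewrite big1_seq // => chi _; rewrite /chinv eqxx mulr0 !mul0r.
case: (eqVneq x2 0) => [->|x2nz] /=.
  by rewrite big1_seq // => chi _; rewrite /chinv eqxx mulr0 !mul0r.
case: (eqVneq x3 0) => [->|x3nz].
  rewrite oppr0 mulf_eq0 (negbTE x1nz) (negbTE x2nz) /=.
  by rewrite big1_seq // => chi /hs [h0 _ _]; rewrite h0 mulr0.
have m0 : x1 * x2 != 0 by rewrite mulf_neq0.
set y := - x3 / (x1 * x2).
have ynz : y != 0 by rewrite /y mulf_neq0 ?invr_eq0 // oppr_eq0.
rewrite (eq_big_seq (fun chi : {ffun 'F_p -> algC} => chi y)); last first.
  move=> chi /hs hc; have [h0 h1 hM] := hc.
  have ey : y = -1 * x1^-1 * x2^-1 * x3 by rewrite /y invfM; ring.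
  rewrite /chinv (negbTE x1nz) (negbTE x2nz) ey !hM.
  by rewrite (proj2 (mchar_inv hc x1nz)) (proj2 (mchar_inv hc x2nz)).
rewrite ortho //; congr (if _ then _ else _); apply/eqP/eqP => h.
  by rewrite -[RHS](divfK m0) -/y h mul1r.
by rewrite /y -h divff.
Qed.

End Chars.

Section Psi.
Variable p : nat.
Variable psi : 'F_p -> algC.
Hypothesis hpsi : is_mchar psi.
Hypothesis hord : mchar_order psi 5.

Lemma psi_nz t : t != 0 -> psi t != 0.
Proof.
move=> tnz; have [_ h _] := hord; apply/eqP => e; move: (h t tnz); rewrite e expr0n /=.
by move/eqP; rewrite eq_sym oner_eq0.
Qed.

Lemma psi_unit t : t != 0 -> psi t \is a GRing.unit.
Proof. by move=> tnz; rewrite unitfE psi_nz. Qed.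

Lemma psiN1 : psi (-1) = 1.
Proof.
have [h0 h1 hM] := hpsi; have [_ h _] := hord.
have n1 : (-1 : 'F_p) != 0 by rewrite oppr_eq0 oner_eq0.
have e2 : psi (-1) ^+ 2 = 1 by rewrite expr2 -hM mulN1r opprK.
have e5 := h _ n1.
by rewrite -e5 -[5%N]/(1 + 2 * 2)%N exprD exprM e2 expr1n mulr1 expr1.
Qed.

Lemma sum_chpow (m : int) : ~~ (5 %| m)%Z -> \sum_t chpow psi m t = 0.
Proof.
move=> ndvd; have [h0 h1 hM] := hpsi; have [_ h5 hmin] := hord.
have [t0 t0nz h] : exists2 t0 : 'F_p, t0 != 0 & psi t0 ^ m != 1.
  have r0 := modz_ge0 m (isT : (5 : int) != 0).
  have r5 := ltz_pmod m (isT : (0 : int) < 5).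
  have rnz : (m %% 5)%Z != 0 by apply: contra ndvd => /eqP /dvdz_mod0P.
  case Er: (m %% 5)%Z r0 r5 rnz => [k|k] //= k5 knz.
  have [t0 t0nz ht0] : exists2 t0 : 'F_p, t0 != 0 & psi t0 ^+ k != 1.
    by apply: hmin; lia.
  exists t0 => //; rewrite (divz_eq m 5) Er exprzDr ?psi_unit // (mulrC (m %/ 5)%Z 5) -exprz_exp.
  by rewrite natz -exprnP h5 // exp1rz mul1r -exprnP.
have e : \sum_t chpow psi m t = psi t0 ^ m * \sum_t chpow psi m t.
  rewrite [LHS](reindex_inj (mulfI t0nz)) mulr_sumr; apply: eq_bigr => t _.
  rewrite /chpow mulf_eq0 (negbTE t0nz) /=; case: eqP => [_|/eqP tnz]; first by rewrite mulr0.
  by rewrite hM exprzMl ?psi_unit.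
move/eqP: e; rewrite -[X in X == _]mul1r -subr_eq0 -mulrBl mulf_eq0 subr_eq0 eq_sym.
by rewrite (negbTE h) /= => /eqP.
Qed.

Lemma chpow_pair (u v : int) t :
  chpow psi u t * chpow psi v (-t) = chpow psi (u + v) t.
Proof.
have [h0 h1 hM] := hpsi.
rewrite /chpow oppr_eq0; case: eqP => [_|/eqP tnz]; first by rewrite mul0r.
by rewrite -mulN1r hM psiN1 mul1r exprzDr ?psi_unit.
Qed.

End Psi.

Unset Implicit Arguments. Set Strict Implicit. Set Printing Implicit Defensive.

Theorem lemma2p2 (p : nat) (pr_p : prime p) (hp : (p %% 5 = 1)%N)
  (psi : 'F_p -> algC) (hpsi : is_mchar psi) (hord : mchar_order psi 5)
  (a b c : int) (hac : ~~ (5 %| a + c)%Z) (hbc : ~~ (5 %| b + c)%Z)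
  (s : seq {ffun 'F_p -> algC}) (s_uniq : uniq s)
  (s_all : forall chi : {ffun 'F_p -> algC}, chi \in s <-> is_mchar chi) :
  \sum_(chi <- s)
     chi (-1) * jacobi3 (chmul (chinv chi) (chpow psi a))
                        (chmul (chinv chi) (chpow psi b))
                        (chmul chi (chpow psi c))
  = - (p.-1)%:R.
Proof.
have [_ ps1 _] := hpsi.
have n1 : (1 < p.-1)%N.
  rewrite ltn_predRL ltn_neqAle prime_gt1 // andbT; apply/eqP => e.
  by rewrite -e in hp.
have HG : \sum_(t1 : 'F_p) \sum_(t2 : 'F_p)
    (if [&& t1 != 0, t2 != 0 & t1 * t2 == - (1 - t1 - t2)]
     then chpow psi a t1 * chpow psi b t2 * chpow psi c (1 - t1 - t2) else 0) = -1.
  rewrite (bigD1 1) //=.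
  have h1 : \sum_(t2 : 'F_p) (if [&& (1 : 'F_p) != 0, t2 != 0 & 1 * t2 == - (1 - 1 - t2)]
     then chpow psi a 1 * chpow psi b t2 * chpow psi c (1 - 1 - t2) else 0) = 0.
    rewrite -[RHS](sum_chpow hpsi hord hbc); apply: eq_bigr => t2 _.
    rewrite oner_eq0 mul1r subrr sub0r opprK eqxx andbT /=.
    case: (eqVneq t2 0) => [->|t2nz] /=; first by rewrite /chpow eqxx.
    by rewrite -(chpow_pair hpsi hord) {1}/chpow oner_eq0 ps1 exp1rz mul1r.
  have h2 : forall t1 : 'F_p, t1 != 1 -> \sum_(t2 : 'F_p)
    (if [&& t1 != 0, t2 != 0 & t1 * t2 == - (1 - t1 - t2)]
     then chpow psi a t1 * chpow psi b t2 * chpow psi c (1 - t1 - t2) else 0)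
     = chpow psi (a + c) t1.
    move=> t1 t11; rewrite (bigD1 1) //= big1 ?addr0; last first.
      move=> t2 t21; case: ifP => // /and3P [_ _ /eqP e]; exfalso.
      have : (t1 - 1) * (t2 - 1) == 0.
        have E : (t1 - 1) * (t2 - 1) = t1 * t2 - - (1 - t1 - t2) by ring.
        by rewrite E e subrr.
      by rewrite mulf_eq0 !subr_eq0 (negbTE t11) (negbTE t21).
    rewrite -(chpow_pair hpsi hord) mulr1 /= (_ : - (1 - t1 - 1) = t1); last by ring.
    rewrite eqxx andbT (_ : 1 - t1 - 1 = - t1); last by ring.
    case: (eqVneq t1 0) => [->|t1nz] /=; first by rewrite /chpow eqxx !mul0r.
    by rewrite {2}/chpow oner_eq0 ps1 exp1rz mulr1.
  rewrite h1 add0r; under eq_bigr => t1 t11 do rewrite h2 //.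
  have := sum_chpow hpsi hord hac; rewrite (bigD1 1) //= {1}/chpow oner_eq0 ps1 exp1rz.
  by move/eqP; rewrite addrC addr_eq0 => /eqP.
rewrite /jacobi3 /chmul.
transitivity (\sum_(chi <- s) \sum_(t1 : 'F_p) \sum_(t2 : 'F_p)
   (chpow psi a t1 * chpow psi b t2 * chpow psi c (1 - t1 - t2)) *
   (chi (-1) * chinv chi t1 * chinv chi t2 * chi (1 - t1 - t2))).
  apply: eq_bigr => chi _; rewrite mulr_sumr; apply: eq_bigr => t1 _.
  rewrite mulr_sumr; apply: eq_bigr => t2 _; ring.
transitivity (\sum_(t1 : 'F_p) \sum_(t2 : 'F_p)
    (if [&& t1 != 0, t2 != 0 & t1 * t2 == - (1 - t1 - t2)]
     then chpow psi a t1 * chpow psi b t2 * chpow psi c (1 - t1 - t2) else 0) * (p.-1)%:R).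
  rewrite exchange_big; apply: eq_bigr => t1 _; rewrite exchange_big.
  apply: eq_bigr => t2 _; rewrite -mulr_sumr (ortho3 pr_p n1 s_uniq s_all).
  by case: ifP => _ //; rewrite mulr0 mul0r.
under eq_bigr => t1 _ do rewrite -big_distrl.
by rewrite -big_distrl /= HG mulN1r.
Qed.
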